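(* There is a function $f(n)\in\mathcal O(n^3)$ such that in every anonymous hedonic game with $n$ agents in which all agents have strict and naturally single-peaked preferences, every sequence of IS deviations starting from any initial partition has length at most $f(n)$; in particular it terminates in an individually stable partition.
   Context: In an anonymous hedonic game on agents $N=[n]$, each agent $i$ has a weak order $\succsim_i^S$ over sizes $\{1,\dots,n\}$, and compares coalitions containing $i$ by their sizes. Strict means the orders are linear. Naturally single-peaked means: for every agent $i$ and integers $x,y,z\in[n]$ with $x>y>z$ or $z>y>x$, $x\succ_i^S y$ implies $y\succsim_i^S z$. An IS deviation of agent $i$ from partition $\pi$ to $\pi'$ is a move of $i$ alone from $\pi(i)$ into another coalition of $\pi$ or into a new singleton such that $\pi'(i)\succ_i\pi(i)$ and $\pi'(j)\succsim_j\pi(j)$ for every $j\in\pi'(i)\setminus\{i\}$. A partition is individually stable (IS) if no IS deviation is possible from it. *)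

(* Defs.v *)
From mathcomp Require Import all_boot.
Set Implicit Arguments. Unset Strict Implicit. Unset Printing Implicit Defensive.

(* A size-preference profile for n agents: pref i x y  means  x ≿_i^S y,
   for sizes x, y (only sizes in [1, n] are meaningful). *)
Definition size_pref (n : nat) := 'I_n -> nat -> nat -> bool.

Definition in_sizes (n x : nat) : bool := (1 <= x <= n).

Definition weak_order_pref n (pref : size_pref n) : Prop :=
  forall i : 'I_n,
    (forall x y, in_sizes n x -> in_sizes n y -> pref i x y || pref i y x) /\
    (forall x y z, in_sizes n x -> in_sizes n y -> in_sizes n z ->
        pref i x y -> pref i y z -> pref i x z).

Definition spref n (pref : size_pref n) (i : 'I_n) (x y : nat) : bool :=
  pref i x y && ~~ pref i y x.

Definition strict_pref n (pref : size_pref n) : Prop :=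
  forall i : 'I_n, forall x y, in_sizes n x -> in_sizes n y ->
    pref i x y -> pref i y x -> x = y.

Definition nat_single_peaked n (pref : size_pref n) : Prop :=
  forall (i : 'I_n) (x y z : nat),
    in_sizes n x -> in_sizes n y -> in_sizes n z ->
    ((z < y < x) || (x < y < z)) ->
    spref pref i x y -> pref i y z.

Definition is_partition n (P : {set {set 'I_n}}) : Prop :=
  partition P [set: 'I_n].

(* the partition obtained when agent i leaves its coalition and joins C
   (C \in P, or C = set0 meaning "a new singleton") *)
Definition move n (P : {set {set 'I_n}}) (i : 'I_n) (C : {set 'I_n})
  : {set {set 'I_n}} :=
  ((P :\ pblock P i) :\ C) :|:
    [set B in [set pblock P i :\ i; i |: C] | B != set0].

Definition IS_deviation n (pref : size_pref n) (P P' : {set {set 'I_n}}) : Prop :=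
  exists (i : 'I_n) (C : {set 'I_n}),
    ((C \in P /\ C != pblock P i) \/ C = set0) /\
    P' = move P i C /\
    spref pref i #|i |: C| #|pblock P i| /\
    (forall j, j \in C -> pref j #|i |: C| #|C|).

Definition individually_stable n (pref : size_pref n) (P : {set {set 'I_n}}) : Prop :=
  ~ exists P', IS_deviation pref P P'.

Definition IS_sequence n (pref : size_pref n) (P0 : {set {set 'I_n}})
  (s : seq {set {set 'I_n}}) : Prop :=
  forall k, k < size s ->
    IS_deviation pref (nth P0 (P0 :: s) k) (nth P0 (P0 :: s) k.+1).

Definition bigO_cube (f : nat -> nat) : Prop :=
  exists c N, forall n, N <= n -> f n <= c * n ^ 3.

(* Main.v *)
Require Import Defs.
From mathcomp Require Import all_boot zify.
From Stdlib Require Import Classical.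
Set Implicit Arguments. Unset Strict Implicit. Unset Printing Implicit Defensive.


Lemma count_le_in (T : eqType) (a1 a2 : pred T) (s : seq T) :
  {in s, forall x, a1 x -> a2 x} -> count a1 s <= count a2 s.
Proof.
elim: s => //= x s IH H.
have Hx := H x (mem_head _ _).
have H' : {in s, forall y, a1 y -> a2 y} by move=> y ys; apply: H; rewrite inE ys orbT.
have := IH H'; case: (a1 x) Hx => [->|] //=; case: (a2 x) => /=; lia.
Qed.

Lemma count_all_in (T : eqType) (a : pred T) (s : seq T) :
  {in s, forall x, a x} -> count a s = size s.
Proof.
elim: s => //= x s IH H.
have H' : {in s, forall y, a y} by move=> y ys; apply: H; rewrite inE ys orbT.
by rewrite H ?mem_head // IH.
Qed.

Lemma count_none_in (T : eqType) (a : pred T) (s : seq T) :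
  {in s, forall x, ~~ a x} -> count a s = 0.
Proof.
elim: s => //= x s IH H.
have H' : {in s, forall y, ~~ a y} by move=> y ys; apply: H; rewrite inE ys orbT.
by rewrite (negbTE (H x (mem_head _ _))) IH.
Qed.

Section Pref.
Variables (n : nat) (pref : size_pref n).
Hypotheses (Hw : weak_order_pref pref) (Hs : strict_pref pref) (Hsp : nat_single_peaked pref).
Variable j : 'I_n.

Local Notation sp := (spref pref j).

Lemma sp_trans x y z : in_sizes n x -> in_sizes n y -> in_sizes n z ->
  sp x y -> sp y z -> sp x z.
Proof.
move=> hx hy hz /andP[pxy npyx] /andP[pyz npzy]; have [_ tr] := @Hw j.
apply/andP; split; first exact: (tr x y z).
apply/negP => pzx; move/negP: npzy; apply; exact: (tr z x y).
Qed.

Lemma sp_or x y : in_sizes n x -> in_sizes n y -> x != y -> sp x y \/ sp y x.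
Proof.
move=> hx hy nxy; have [tot _] := @Hw j.
rewrite /spref; case pxy: (pref j x y); case pyx: (pref j y x) => /=; auto.
- by move: (@Hs j _ _ hx hy pxy pyx) => e; rewrite e eqxx in nxy.
- by move: (tot x y hx hy); rewrite pxy pyx.
Qed.

Lemma sp_asym x y : sp x y -> ~~ sp y x.
Proof. by rewrite /spref => /andP[-> _]; rewrite andbF. Qed.

Lemma sp_irr x : ~~ sp x x.
Proof. by rewrite /spref; case: (pref j x x). Qed.

Lemma sp_peak x y z : in_sizes n x -> in_sizes n y -> in_sizes n z ->
  ((z < y < x) || (x < y < z)) -> sp x y -> sp y z.
Proof.
move=> hx hy hz hord hxy; have pyz := Hsp hx hy hz hord hxy.
rewrite /spref pyz /=; apply/negP => pzy.
have e := @Hs j _ _ hy hz pyz pzy; subst z; move: hord; rewrite !ltnn; lia.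
Qed.

Lemma no_valley a x b : in_sizes n a -> in_sizes n x -> in_sizes n b ->
  a < x < b -> sp a b -> sp x b.
Proof.
move=> ha hx hb hord hab.
have nax : a != x by apply/eqP; lia.
have [hax|hxa] := sp_or ha hx nax.
- by apply: (sp_peak ha hx hb) => //; apply/orP; right.
- exact: (sp_trans hx ha hb hxa hab).
Qed.

Definition L t := count (fun x => sp t x) (iota 1 t.-1).

Lemma L_le t : L t <= t.-1.
Proof. by rewrite /L -{2}(size_iota 1 t.-1) count_size. Qed.

Lemma in_iota1 x k : x \in iota 1 k -> 1 <= x <= k.
Proof. rewrite mem_iota; lia. Qed.

Lemma L_up a b : 1 <= b -> b < a -> a <= n -> sp a b -> L b + 1 <= L a.
Proof.
move=> b1 ba an hab; rewrite /L.
have -> : a.-1 = b.-1 + (a - b) by lia.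
rewrite iotaD count_cat.
have -> : (1 + b.-1) = b by lia.
have -> : a - b = (a - b).-1.+1 by lia.
rewrite /= hab /=.
have : count (fun x => sp b x) (iota 1 b.-1) <= count (fun x => sp a x) (iota 1 b.-1).
  apply: count_le_in => x /in_iota1 hx hbx.
  apply: (sp_trans (x:=a) (y:=b)) => //; rewrite /in_sizes; lia.
lia.
Qed.

Lemma L_down a b : 1 <= a -> a < b -> b <= n -> sp a b -> L b <= L a.
Proof.
move=> a1 ab bn hab; rewrite /L.
have -> : b.-1 = a.-1 + (b - a) by lia.
rewrite iotaD count_cat.
have -> : (1 + a.-1) = a by lia.
rewrite (@count_none_in _ _ (iota a (b - a))); last first.
  move=> x; rewrite mem_iota => hx.
  have [ea|nea] := eqVneq x a; first by subst x; exact: sp_asym.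
  apply: sp_asym; apply: (no_valley (a:=a)) => //; rewrite /in_sizes; lia.
rewrite addn0; apply: count_le_in => x /in_iota1 hx hbx.
apply: (sp_trans (y:=b)) => //; rewrite /in_sizes; lia.
Qed.

Lemma L_step t : 2 <= t -> t <= n -> L t <= L t.-1 + 1.
Proof.
move=> t2 tn.
have ht : in_sizes n t by rewrite /in_sizes; lia.
have ht1 : in_sizes n t.-1 by rewrite /in_sizes; lia.
have ne : t.-1 != t by apply/eqP; lia.
have [h|h] := sp_or ht1 ht ne.
- have := L_down (a:=t.-1) (b:=t); lia.
- have Lt1 : L t.-1 = t.-1.-1.
    rewrite /L count_all_in ?size_iota // => x /in_iota1 hx.
    apply: (sp_peak (x:=t)) => //; rewrite /in_sizes; try lia.
    idtac.
  have := L_le t; lia.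
Qed.

Definition V t := 2 * n * L t + n.+1 * (n - t).

Lemma V_C c : 1 <= c -> c.+1 <= n -> sp c.+1 c -> V c + (n - 1) <= V c.+1.
Proof using Hw Hs Hsp.
move=> c1 cn h; have hL := L_up c1 (ltnSn c) cn h.
have hm := leq_mul (leqnn n) hL.
rewrite /V; nia.
Qed.

Lemma V_S s : 2 <= s -> s <= n -> V s <= V s.-1 + (n - 1).
Proof using Hw Hs Hsp.
move=> s2 sn; have hL := L_step s2 sn.
have hm := leq_mul (leqnn n) hL.
rewrite /V; nia.
Qed.

Lemma V_mover s c : 1 <= s -> s <= n -> c.+1 <= n -> sp c.+1 s ->
  V s + (s - 1) * (n - 1) + 1 <= V c.+1 + c * (n - 1).
Proof using Hw Hs Hsp.
move=> s1 sn cn h.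
have ne : c.+1 != s by apply/eqP => e; move: h; rewrite e (negbTE (sp_irr s)).
case: (ltngtP s c.+1) => hsc.
- have hL := L_up s1 hsc cn h.
  have hm := leq_mul (leqnn n) hL.
  rewrite /V; nia.
- have hL := L_down (ltn0Sn c) hsc sn h.
  have hm := leq_mul (leqnn n) hL.
  rewrite /V; nia.
- by rewrite hsc eqxx in ne.
Qed.

End Pref.

Lemma move_props n (P : {set {set 'I_n}}) (i : 'I_n) (C : {set 'I_n}) :
  is_partition P -> ((C \in P /\ C != pblock P i) \/ C = set0) ->
  is_partition (move P i C) /\
  i \notin C /\
  pblock (move P i C) i = i |: C /\
  (forall j, j \in C -> pblock (move P i C) j = i |: C /\ pblock P j = C) /\
  (forall j, j \in pblock P i -> j != i -> pblock (move P i C) j = pblock P i :\ i) /\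
  (forall j, j \notin pblock P i -> j \notin C -> pblock (move P i C) j = pblock P j).
Proof.
rewrite /is_partition => hP hC.
set S := pblock P i.
have cov : cover P = setT := cover_partition hP.
have tI := partition_trivIset hP.
have iS : i \in S by rewrite mem_pblock cov inE.
have SP : S \in P by apply: pblock_mem; rewrite cov inE.
have set0P : (set0 \in P) = false := partition0 hP.
have iC : i \notin C.
  case: hC => [[CP CS]|->]; last by rewrite inE.
  apply/negP => iC; move: CS; rewrite /S (def_pblock tI CP iC) eqxx //.
have dSC : forall x, x \in S -> x \in C = false.
  case: hC => [[CP CS]|->] x xS; last by rewrite inE.
  have tIP := elimT trivIsetP tI.
  have d : [disjoint S & C] by apply: tIP => //; rewrite eq_sym.
  exact: (disjointFr d xS).
set Q2 := (P :\ S) :\ C.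
set D2 := (setT :\: S) :\: C.
have hQ2 : partition Q2 D2.
  case: hC => [[CP CS]|C0].
  - apply: partitionD1; first exact: partitionD1.
    by rewrite !inE CS CP.
  - have -> : Q2 = P :\ S.
      apply/setP => B; rewrite /Q2 C0 !inE.
      by case: (B =P set0) => [->|]; rewrite ?set0P ?andbF.
    by rewrite /D2 C0 setD0; apply: partitionD1.
have iC0 : i |: C != set0 by apply/set0Pn; exists i; rewrite setU11.
set Q3 := (i |: C) |: Q2.
set D3 := (i |: C) :|: D2.
have hQ3 : partition Q3 D3.
  apply: partitionU1 => //.
  apply/pred0P => x /=; rewrite !inE.
  case: (x =P i) => [->|_]; first by rewrite iS (negbTE iC) !andbF.
  by case: (x \in C); rewrite ?andbF.
have eP : move P i C = (if S :\ i == set0 then Q3 else (S :\ i) |: Q3).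
  apply/setP => B; rewrite /move -/S.
  have iC0' : (set0 == i |: C) = false by rewrite eq_sym (negbTE iC0).
  case: ifP => e; rewrite !inE.
  - move/eqP: e => ->.
    case: (B =P set0) => [->|/eqP nB0].
    + by rewrite set0P iC0' !andbF.
    + by rewrite /= andbT orbC.
  - have e' : (set0 == S :\ i) = false by rewrite eq_sym e.
    case: (B =P set0) => [->|/eqP nB0].
    + by rewrite set0P e' iC0' !andbF.
    + rewrite andbT.
      by case: (B == S :\ i); case: (B == i |: C); rewrite /= ?orbT ?orbF.
have hP' : partition (move P i C) setT.
  rewrite eP; case: ifP => e.
  - suff <- : D3 = setT by [].
    apply/setP => x; rewrite !inE.
    move/eqP: e => /setP/(_ x); rewrite !inE => hx.
    by move: hx; case: (x == i); case: (x \in C); case: (x \in S).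
  - have -> : setT = (S :\ i) :|: D3.
      apply/setP => x; rewrite !inE.
      by case: (x == i); case: (x \in C); case: (x \in S).
    apply: partitionU1 => //; first by rewrite e.
    apply/pred0P => x /=; rewrite !inE.
    case: (x =P i) => [->|_] //=.
    by case xS: (x \in S) => //=; rewrite dSC.
have tI' := partition_trivIset hP'.
have iCP' : i |: C \in move P i C.
  by rewrite eP; case: ifP => _; rewrite !inE eqxx ?orbT.
refine (conj hP' (conj iC (conj _ (conj _ (conj _ _))))).
- by apply: def_pblock => //; rewrite setU11.
- move=> j jC; split; first by apply: def_pblock => //; rewrite setU1r.
  case: hC => [[CP _]|C0]; first exact: def_pblock.
  by move: jC; rewrite C0 inE.
- move=> j jS ji.
  have jSi : j \in S :\ i by rewrite !inE ji jS.
  have nz : S :\ i != set0 by apply/set0Pn; exists j.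
  apply: def_pblock => //; rewrite eP (negbTE nz) !inE eqxx //.
- move=> j jS jC.
  have jcov : j \in cover P by rewrite cov inE.
  have BP := pblock_mem jcov.
  have jB : j \in pblock P j by rewrite mem_pblock.
  apply: def_pblock => //.
  rewrite eP; have inQ2 : pblock P j \in Q2.
    rewrite !inE BP andbT; apply/andP; split.
    + by apply: contraNneq jC => <-.
    + by apply: contraNneq jS => <-.
  by case: ifP => _; rewrite !in_setU1 inQ2 !orbT.
Qed.

Definition Phi n (pref : size_pref n) (P : {set {set 'I_n}}) :=
  \sum_(j : 'I_n) V pref j #|pblock P j|.

Lemma card_le_n n (A : {set 'I_n}) : #|A| <= n.
Proof. by have := max_card A; rewrite card_ord. Qed.

Lemma step n (pref : size_pref n) :
  weak_order_pref pref -> strict_pref pref -> nat_single_peaked pref ->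
  forall P P', is_partition P -> IS_deviation pref P P' ->
  is_partition P' /\ Phi pref P + 1 <= Phi pref P'.
Proof.
move=> Hw Hs Hsp P P' hP [i [C [hC [-> [hi hCj]]]]].
have [hP' [iC [pi [pC [pS pO]]]]] := move_props hP hC.
split => //.
have tI := partition_trivIset hP.
have cov : cover P = setT := cover_partition hP.
set S := pblock P i in hi pS pO *.
have iS : i \in S by rewrite mem_pblock cov inE.
have cU : #|i |: C| = #|C|.+1 by rewrite cardsU1 iC.
have sD : #|S| = #|S :\ i|.+1 by rewrite (cardsD1 i S) iS.
have SC : forall j, j \in S -> j \notin C.
  move=> j jS; apply/negP => jC.
  have [_ e] := pC j jC.
  have e2 : pblock P j = S by apply: same_pblock.
  have e3 : C = S by rewrite -e e2.
  by move: iC; rewrite e3 iS.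
have cn : #|C|.+1 <= n by rewrite -cU card_le_n.
have sn : #|S| <= n by rewrite card_le_n.
have hsum : \sum_(j | j != i) V pref j #|pblock P j| + #|C| * (n - 1) <=
            \sum_(j | j != i) V pref j #|pblock (move P i C) j| + #|S :\ i| * (n - 1).
  have e1 : \sum_(j | j != i) (if j \in C then n - 1 else 0) = #|C| * (n - 1).
    rewrite -big_mkcondr (eq_bigl (fun j => j \in C)) ?sum_nat_const // => j /=.
    by case: (j =P i) => [->|]; rewrite ?(negbTE iC).
  have e2 : \sum_(j | j != i) (if j \in S then n - 1 else 0) = #|S :\ i| * (n - 1).
    rewrite -big_mkcondr (eq_bigl (fun j => j \in S :\ i)) ?sum_nat_const // => j /=.
    by rewrite !inE.
  rewrite -e1 -e2 -!big_split /=; apply: leq_sum => j ji.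
  case jC: (j \in C).
  - have [p1 p2] := pC j jC.
    have jS : (j \in S) = false by apply/negP => /SC; rewrite jC.
    rewrite p1 p2 cU jS /=.
    have c1 : 1 <= #|C| by apply/card_gt0P; exists j.
    have hc := hCj j jC; rewrite cU in hc.
    have hsp : spref pref j #|C|.+1 #|C|.
      rewrite /spref hc /=; apply/negP => h2.
      have : #|C|.+1 = #|C| by apply: (@Hs j) => //; rewrite /in_sizes; lia.
      lia.
    by rewrite addn0; apply: V_C.
  - case jS: (j \in S).
    + have [jSi ->] : j \in S :\ i /\ pblock (move P i C) j = S :\ i.
        by split; [rewrite !inE ji jS | apply: pS].
      have -> : pblock P j = S by apply: same_pblock.
      have s2 : 2 <= #|S| by rewrite sD ltnS; apply/card_gt0P; exists j.
      have := V_S Hw Hs Hsp j s2 sn; rewrite sD /=; lia.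
    + rewrite pO ?jS ?jC //; lia.
rewrite /Phi (bigD1 i) //= [X in _ <= X](bigD1 i) //= pi cU.
rewrite cU in hi.
have s1 : 1 <= #|S| by rewrite sD.
have := V_mover Hw Hs Hsp s1 sn cn hi; rewrite sD subn1 /=.
move: hsum.
set X := \sum_(j | j != i) _; set Y := \sum_(j | j != i) _.
set a := #|C| * _; set b := #|S :\ i| * _.
lia.
Qed.


Definition fbound (n : nat) := n * (3 * n * n + n).

Lemma V_le n (pref : size_pref n) (j : 'I_n) t : t <= n -> V pref j t <= 3 * n * n + n.
Proof. move=> tn; have := L_le pref j t; rewrite /V; nia. Qed.

Lemma Phi_le n (pref : size_pref n) P : Phi pref P <= fbound n.
Proof.
rewrite /Phi /fbound.
have h : \sum_(j : 'I_n) V pref j #|pblock P j| <= \sum_(j : 'I_n) (3 * n * n + n).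
  by apply: leq_sum => j _; apply: V_le; apply: card_le_n.
apply: (leq_trans h); by rewrite sum_nat_const card_ord.
Qed.

Lemma seq_prop n (pref : size_pref n) :
  weak_order_pref pref -> strict_pref pref -> nat_single_peaked pref ->
  forall P0 s, is_partition P0 -> IS_sequence pref P0 s ->
  forall k, k <= size s ->
  is_partition (nth P0 (P0 :: s) k) /\ Phi pref P0 + k <= Phi pref (nth P0 (P0 :: s) k).
Proof.
move=> Hw Hs Hsp P0 s hP0 hs; elim=> [|k IH] ks; first by rewrite addn0.
have [hk hPk] := IH (ltnW ks).
have [hk' hPk'] := step Hw Hs Hsp hk (hs k ks).
split => //; lia.
Qed.

Lemma exists_stable n (pref : size_pref n) :
  weak_order_pref pref -> strict_pref pref -> nat_single_peaked pref ->
  forall k P, is_partition P -> fbound n - Phi pref P <= k ->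
  exists s, IS_sequence pref P s /\ individually_stable pref (last P s).
Proof.
move=> Hw Hs Hsp; elim=> [|k IH] P hP hk.
all: case: (classic (exists P', IS_deviation pref P P')) => [[P' hd]|hns]; last first.
1,3: by exists [::]; split => // m.
all: have [hP' hPhi] := step Hw Hs Hsp hP hd.
all: have hb := Phi_le pref P'.
- lia.
- have [s' [hs' hst]] := IH P' hP' (ltac:(lia)).
  exists (P' :: s'); split => //.
  move=> [|m] /= hm; first by [].
  have e1 : nth P (P' :: s') m = nth P' (P' :: s') m by apply: set_nth_default => /=; lia.
  have e2 : nth P (P' :: s') m.+1 = nth P' (P' :: s') m.+1 by apply: set_nth_default => /=; lia.
  have := hs' m hm; rewrite -e1 -e2 //.
Qed.

Theorem theorem3p5 :
  exists f : nat -> nat, bigO_cube f /\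
    forall (n : nat) (pref : size_pref n),
      weak_order_pref pref -> strict_pref pref -> nat_single_peaked pref ->
      (forall (P0 : {set {set 'I_n}}) (s : seq {set {set 'I_n}}),
          is_partition P0 -> IS_sequence pref P0 s -> size s <= f n) /\
      (forall P0 : {set {set 'I_n}}, is_partition P0 ->
          exists s, IS_sequence pref P0 s /\
            individually_stable pref (last P0 s)).
Proof.
exists fbound; split.
  exists 4, 0 => n _; rewrite /fbound; nia.
move=> n pref Hw Hs Hsp; split.
- move=> P0 s hP0 hs.
  have [_ h] := seq_prop Hw Hs Hsp hP0 hs (leqnn (size s)).
  have := Phi_le pref (nth P0 (P0 :: s) (size s)); lia.
- move=> P0 hP0; exact: (exists_stable Hw Hs Hsp hP0 (leq_subr _ _)).
Qed.
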